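(* Assume that $\hat F$ is differentiable on $\mathcal F$ and $\|\hat F'(y)-\hat F'(x)\|_F\le L_{\hat F}\|y-x\|$ for all $x,y\in\mathcal F$ (Assumption 1). Let $\{x_k\}$ be generated by Scheme 1 with $\tau_k=\hat f_1(x_k)$ and $\varepsilon_k=\varepsilon\ge 0$ for all $k$. Then for every $k\in\mathbb N$ and every $r>0$: $$\frac{8L_{\hat F}^2}{L}\Big(\varepsilon+\frac{\hat f_1(x_0)-\hat f_1(x_k)}{k}\Big)\ \ge\ \min_{i\in\{0,\dots,k-1\}}\Big\|2L_{\hat F}\big(T_{2L_{\hat F},\hat f_1(x_i)}(x_i)-x_i\big)\Big\|^2,$$ $$L_{\hat F}\Big(\varepsilon+\frac{\hat f_1(x_0)-\hat f_1(x_k)}{k}\Big)\ \ge\ \min_{i\in\{0,\dots,k-1\}} 2(L_{\hat F}r)^2\,\varkappa\!\Big(\frac{\Delta_r(x_i)}{4\hat f_1(x_i)L_{\hat F}r^2}\Big),$$ where $\varkappa(t)=\frac{t^2}{2}$ for $t\in[0,1]$ and $\varkappa(t)=t-\frac12$ for $t>1$.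
   Context: Let $F:\mathbb R^n\to\mathbb R^m$ be a smooth map, $\hat F(x)=\frac{1}{\sqrt m}F(x)$ with Jacobian $\hat F'(x)\in\mathbb R^{m\times n}$. All vector norms are Euclidean, $\|\cdot\|$ on matrices is the spectral norm, $\|\cdot\|_F$ the Frobenius norm. Set $\hat f_1(x)=\|\hat F(x)\|$, $\hat f_2=\hat f_1^2$, $\phi(x,y)=\|\hat F(x)+\hat F'(x)(y-x)\|$, and for $L>0,\tau>0$ the local model $\psi_{x,L,\tau}(y)=\frac{\tau}{2}+\frac{\phi(x,y)^2}{2\tau}+\frac L2\|y-x\|^2$, with $T_{L,\tau}(x)=\arg\min_{y\in\mathbb R^n}\psi_{x,L,\tau}(y)$. For $r>0$, $\Delta_r(x)=\hat f_2(x)-\min_y\{\phi(x,y)^2:\|y-x\|\le r\}$. $\mathcal F\subseteq\mathbb R^n$ is a closed convex set with nonempty interior; level sets are $\mathcal L(v)=\{x:\hat f_1(x)\le v\}$; it is assumed throughout that $\mathcal L(\hat f_1(x_0))\subseteq\mathcal F$ and that $\mathcal F$ is large enough that the whole generated sequence (with nonincreasing $\hat f_1$ values) lies in $\mathcal F$. Scheme 1 (input: $x_0$ with $\mathcal L(\hat f_1(x_0))\subseteq\mathcal F$; a rule choosing $\varepsilon_k\ge0$ and $\tau_k>0$; a constant $L\in(0,L_{\hat F}]$, $L_0=L$). For $k=0,1,\dots$: (1) choose $\tau_k,\varepsilon_k$; (2) compute $x_{k+1}$ with $\psi_{x_k,L_k,\tau_k}(x_{k+1})-\psi_{x_k,L_k,\tau_k}(T_{L_k,\tau_k}(x_k))\le\varepsilon_k$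 and $\hat f_1(x_k)\ge\psi_{x_k,L_k,\tau_k}(x_{k+1})$; (3) if $\hat f_1(x_{k+1})>\psi_{x_k,L_k,\tau_k}(x_{k+1})$, set $L_k:=\min\{2L_k,2L_{\hat F}\}$ and return to (1); (4) set $L_{k+1}=\max\{L_k/2,L\}$. *)

(* Defs.v *)
From HB Require Import structures.
From mathcomp Require Import all_boot all_order all_algebra.
From mathcomp Require Import all_classical all_reals all_analysis.
Set Implicit Arguments. Unset Strict Implicit. Unset Printing Implicit Defensive.
Import Order.TTheory GRing.Theory Num.Theory.
Import numFieldNormedType.Exports.
Local Open Scope classical_set_scope.
Local Open Scope ring_scope.

Section Defs.
Variable R : realType.

(* Frobenius norm of a matrix; on row/column vectors this is the Euclidean norm *)
Definition frob (p q : nat) (A : 'M[R]_(p, q)) : R :=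
  Num.sqrt (\sum_(i < p) \sum_(j < q) A i j ^+ 2).

Variables (n m : nat).

Definition Fhat (F : 'rV[R]_n -> 'rV[R]_m) (x : 'rV[R]_n) : 'rV[R]_m :=
  (Num.sqrt (m%:R))^-1 *: F x.

Definition f1 (F : 'rV[R]_n -> 'rV[R]_m) (x : 'rV[R]_n) : R := frob (Fhat F x).

Definition f2 (F : 'rV[R]_n -> 'rV[R]_m) (x : 'rV[R]_n) : R := f1 F x ^+ 2.

(* phi(x,y) = || Fhat(x) + Fhat'(x)(y - x) ||; with row vectors the
   Jacobian 'J acts on the right: v *m 'J f x = 'd f x v. *)
Definition phi (F : 'rV[R]_n -> 'rV[R]_m) (x y : 'rV[R]_n) : R :=
  frob (Fhat F x + (y - x) *m 'J (Fhat F) x).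

Definition psi (F : 'rV[R]_n -> 'rV[R]_m) (x : 'rV[R]_n) (L tau : R)
    (y : 'rV[R]_n) : R :=
  tau / 2 + phi F x y ^+ 2 / (2 * tau) + L / 2 * frob (y - x) ^+ 2.

(* T_{L,tau}(x) = argmin_y psi_{x,L,tau}(y) (the minimizer is unique for L > 0) *)
Definition Tmap (F : 'rV[R]_n -> 'rV[R]_m) (L tau : R) (x : 'rV[R]_n)
  : 'rV[R]_n :=
  xget 0 [set y | forall z, psi F x L tau y <= psi F x L tau z].

Definition Delta (F : 'rV[R]_n -> 'rV[R]_m) (r : R) (x : 'rV[R]_n) : R :=
  f2 F x - inf [set phi F x y ^+ 2 | y in [set y | frob (y - x) <= r]].

(* Lst i  = value of L_i at the start of iteration i,
   Lacc i = value of L_i when the test in step (3) is passed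
            (obtained from Lst i by j doublings l := min(2l, 2 L_F)). *)
Definition scheme1 (F : 'rV[R]_n -> 'rV[R]_m) (LF L eps : R)
    (x : nat -> 'rV[R]_n) (Lacc Lst : nat -> R) (k : nat) : Prop :=
  Lst 0%N = L /\
  forall i : nat, (i < k)%N ->
    (exists j : nat,
          Lacc i = iter j (fun l => Num.min (2 * l) (2 * LF)) (Lst i)) /\
        0 < f1 F (x i) /\
        psi F (x i) (Lacc i) (f1 F (x i)) (x i.+1)
          - psi F (x i) (Lacc i) (f1 F (x i))
              (Tmap F (Lacc i) (f1 F (x i)) (x i)) <= eps /\
        psi F (x i) (Lacc i) (f1 F (x i)) (x i.+1) <= f1 F (x i) /\
        f1 F (x i.+1) <= psi F (x i) (Lacc i) (f1 F (x i)) (x i.+1) /\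
        Lst i.+1 = Num.max (Lacc i / 2) L.

End Defs.

Definition varkappa (R : realType) (t : R) : R :=
  if t <= 1 then t ^+ 2 / 2 else t - 1 / 2.

(* Main.v *)
Require Import Defs.
From HB Require Import structures.
From mathcomp Require Import all_boot all_order all_algebra.
From mathcomp Require Import all_classical all_reals all_analysis.
From mathcomp Require Import ring lra.
Import Order.TTheory GRing.Theory Num.Theory.
Import numFieldNormedType.Exports.
Local Open Scope classical_set_scope.
Local Open Scope ring_scope.
Set Implicit Arguments. Unset Strict Implicit. Unset Printing Implicit Defensive.

Section Alg.
Variable R : realType.

Definition Bf p (u v : 'rV[R]_p) : R := (u *m v^T) 0 0.
Definition Qf p (v : 'rV[R]_p) : R := Bf v v.

Lemma BfE p (u v : 'rV[R]_p) : Bf u v = \sum_j u 0 j * v 0 j.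
Proof. by rewrite /Bf mxE; apply: eq_bigr => j _; rewrite mxE. Qed.

Lemma BfC p (u v : 'rV[R]_p) : Bf u v = Bf v u.
Proof. by rewrite !BfE; apply: eq_bigr => j _; rewrite mulrC. Qed.

Lemma BfDl p (u v w : 'rV[R]_p) : Bf (u + v) w = Bf u w + Bf v w.
Proof. by rewrite !BfE -big_split; apply: eq_bigr => j _; rewrite mxE mulrDl. Qed.

Lemma BfDr p (u v w : 'rV[R]_p) : Bf w (u + v) = Bf w u + Bf w v.
Proof. by rewrite BfC BfDl !(BfC w). Qed.

Lemma BfZl p c (u w : 'rV[R]_p) : Bf (c *: u) w = c * Bf u w.
Proof. by rewrite !BfE mulr_sumr; apply: eq_bigr => j _; rewrite mxE mulrA. Qed.

Lemma BfZr p c (u w : 'rV[R]_p) : Bf w (c *: u) = c * Bf w u.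
Proof. by rewrite BfC BfZl BfC. Qed.

Lemma BfNl p (u w : 'rV[R]_p) : Bf (- u) w = - Bf u w.
Proof. by rewrite -scaleN1r BfZl mulN1r. Qed.

Lemma BfNr p (u w : 'rV[R]_p) : Bf w (- u) = - Bf w u.
Proof. by rewrite BfC BfNl BfC. Qed.

Lemma Bf0l p (w : 'rV[R]_p) : Bf 0 w = 0.
Proof. by rewrite BfE big1 // => j _; rewrite mxE mul0r. Qed.

Lemma BfM p q (w : 'rV[R]_q) (e : 'rV[R]_p) (J : 'M[R]_(p, q)) :
  Bf w (e *m J) = Bf (w *m J^T) e.
Proof. by rewrite /Bf trmx_mul mulmxA. Qed.

Lemma QfE p (v : 'rV[R]_p) : Qf v = \sum_j v 0 j ^+ 2.
Proof. by rewrite /Qf BfE; apply: eq_bigr => j _; rewrite expr2. Qed.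

Lemma Qf_ge0 p (v : 'rV[R]_p) : 0 <= Qf v.
Proof. by rewrite QfE sumr_ge0 // => j _; rewrite sqr_ge0. Qed.

Lemma Qf_eq0 p (v : 'rV[R]_p) : Qf v = 0 -> v = 0.
Proof.
rewrite QfE => H; apply/matrixP => i j; rewrite (ord1 i) mxE.
have := @psumr_eq0P R _ predT (fun j => v 0 j ^+ 2) (fun j _ => sqr_ge0 _) H j isT.
by move/eqP; rewrite sqrf_eq0 => /eqP.
Qed.

Lemma frobE p (v : 'rV[R]_p) : frob v = Num.sqrt (Qf v).
Proof. by rewrite /frob big_ord1 QfE. Qed.

Lemma frob2 p (v : 'rV[R]_p) : frob v ^+ 2 = Qf v.
Proof. by rewrite frobE sqr_sqrtr // Qf_ge0. Qed.

Lemma frob_ge0 p (v : 'rV[R]_p) : 0 <= frob v.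
Proof. by rewrite frobE sqrtr_ge0. Qed.

Lemma QfD p (u v : 'rV[R]_p) : Qf (u + v) = Qf u + 2 * Bf u v + Qf v.
Proof. rewrite /Qf BfDl !BfDr (BfC v u); ring. Qed.

Lemma QfZ p c (v : 'rV[R]_p) : Qf (c *: v) = c ^+ 2 * Qf v.
Proof. rewrite /Qf BfZl BfZr; ring. Qed.

Lemma QfN p (v : 'rV[R]_p) : Qf (- v) = Qf v.
Proof. rewrite /Qf BfNl BfNr; ring. Qed.

Lemma QfB p (u v : 'rV[R]_p) : Qf (u - v) = Qf (v - u).
Proof. by rewrite -QfN opprB. Qed.

End Alg.
Section Min.
Variables (R : realType) (n m : nat).
Variables (a : 'rV[R]_m) (J : 'M[R]_(n, m)) (tau M : R).
Hypotheses (tau0 : 0 < tau) (M0 : 0 < M).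

Definition Pf (d : 'rV[R]_n) := Qf (a + d *m J) / (2 * tau) + M / 2 * Qf d.

Definition Amx : 'M[R]_n := tau^-1 *: (J *m J^T) + M%:M.

Lemma mulAmx (v : 'rV[R]_n) : v *m Amx = tau^-1 *: (v *m J *m J^T) + M *: v.
Proof. by rewrite /Amx mulmxDr -scalemxAr mulmxA mul_mx_scalar. Qed.

Lemma Amx_unit : Amx \in unitmx.
Proof.
rewrite -row_free_unit -kermx_eq0; apply/eqP/row_matrixP => i; rewrite row0.
set v := row i (kermx Amx).
have vA : v *m Amx = 0 by rewrite /v -row_mul mulmx_ker row0.
have : Bf (v *m Amx) v = 0 by rewrite vA Bf0l.
rewrite mulAmx BfDl !BfZl -BfM -/(Qf _) -/(Qf v) => H.
have h1 := Qf_ge0 (v *m J); have h2 := Qf_ge0 v.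
have ti : 0 < tau^-1 by rewrite invr_gt0.
apply: Qf_eq0; apply/eqP; rewrite eq_le h2 andbT.
have : M * Qf v <= 0 by rewrite -H lerDr mulr_ge0 // ltW.
by rewrite pmulr_rle0.
Qed.

Definition dstar : 'rV[R]_n := - (tau^-1 *: (a *m J^T)) *m invmx Amx.

Lemma dstar_key : tau^-1 *: ((a + dstar *m J) *m J^T) + M *: dstar = 0.
Proof.
have : dstar *m Amx = - (tau^-1 *: (a *m J^T)).
  by rewrite /dstar -mulmxA mulVmx ?Amx_unit // mulmx1.
rewrite mulAmx => H.
by rewrite mulmxDl scalerDr -addrA H addrN.
Qed.

Lemma Pf_id d : Pf d = Pf dstar + Qf ((d - dstar) *m J) / (2 * tau)
   + M / 2 * Qf (d - dstar).
Proof.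
have -> : d = dstar + (d - dstar) by rewrite addrC subrK.
set e := d - dstar.
have -> : dstar + e - dstar = e by rewrite addrC addKr.
rewrite /Pf mulmxDl addrA !QfD.
have := congr1 (fun v => Bf v e) dstar_key.
rewrite Bf0l BfDl !BfZl -BfM => H.
have tn : tau != 0 by rewrite gt_eqF.
have H' : tau^-1 * Bf (a + dstar *m J) (e *m J) = - (M * Bf dstar e).
  by apply/eqP; rewrite -addr_eq0 H.
have HX : Bf (a + dstar *m J) (e *m J) = - (tau * (M * Bf dstar e)).
  by rewrite -[LHS]mul1r -(mulfV tn) -mulrA H' mulrN.
rewrite HX.
field; exact: tn.
Qed.

End Min.
Section TmapS.
Variables (R : realType) (n m : nat) (F : 'rV[R]_n -> 'rV[R]_m).

Lemma psiE x M tau y : psi F x M tau y =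
  tau / 2 + Pf (Fhat F x) ('J (Fhat F) x) tau M (y - x).
Proof. by rewrite /psi /phi !frob2 /Pf addrA. Qed.

Lemma Tmap_spec M tau x : 0 < M -> 0 < tau ->
  (forall z, psi F x M tau (Tmap F M tau x) <= psi F x M tau z) /\
  (forall z, psi F x M tau (Tmap F M tau x) + M / 2 * Qf (z - Tmap F M tau x)
      <= psi F x M tau z).
Proof.
move=> M0 tau0.
set a := Fhat F x; set J := 'J (Fhat F) x.
set ys := x + dstar a J tau M.
have t2 : 0 < 2 * tau by rewrite mulr_gt0.
have Hid : forall y, psi F x M tau y = psi F x M tau ys
   + Qf ((y - ys) *m J) / (2 * tau) + M / 2 * Qf (y - ys).
  move=> y; rewrite !psiE (Pf_id a J tau0 M0 (y - x)).
  have -> : ys - x = dstar a J tau M by rewrite /ys addrC addKr.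
  have -> : y - x - dstar a J tau M = y - ys by rewrite /ys opprD addrA.
  by rewrite !addrA.
have pos : forall v : 'rV[R]_n, 0 <= Qf (v *m J) / (2 * tau) + M / 2 * Qf v.
  move=> v; apply: addr_ge0; first by rewrite divr_ge0 ?Qf_ge0 // ltW.
  by rewrite mulr_ge0 ?Qf_ge0 // divr_ge0 // ltW.
have ysmin : forall z, psi F x M tau ys <= psi F x M tau z.
  by move=> z; rewrite (Hid z) -addrA lerDl pos.
have Tin := xgetPex 0 (ex_intro (fun y => forall z, psi F x M tau y <= psi F x M tau z) ys ysmin).
rewrite -/(Tmap F M tau x) in Tin.
set T := Tmap F M tau x in Tin *.
have eT : T = ys.
  have := Tin ys; rewrite (Hid T) -addrA gerDl => H.
  have h1 : 0 <= Qf ((T - ys) *m J) / (2 * tau) by rewrite divr_ge0 ?Qf_ge0 // ltW.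
  have h2 : 0 <= Qf (T - ys) by apply: Qf_ge0.
  have h3 : M / 2 * Qf (T - ys) <= 0 by lra.
  have h4 : Qf (T - ys) = 0.
    apply/eqP; rewrite eq_le h2 andbT.
    by move: h3; rewrite pmulr_rle0 // divr_gt0.
  by apply/eqP; rewrite -subr_eq0; apply/eqP/Qf_eq0.
split=> // z; rewrite eT (Hid z) -[in X in _ <= X]addrA.
have h : 0 <= Qf ((z - ys) *m J) / (2 * tau) by rewrite divr_ge0 ?Qf_ge0 // ltW.
lra.
Qed.

End TmapS.
Section Step.
Variables (R : realType) (n m : nat) (F : 'rV[R]_n -> 'rV[R]_m).
Variables (z : 'rV[R]_n) (LF : R).
Hypotheses (LF0 : 0 < LF) (tau0 : 0 < f1 F z).

Local Notation tau := (f1 F z).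
Local Notation T := (Tmap F (2 * LF) tau z).
Local Notation D := (tau - psi F z (2 * LF) tau T).

Lemma Qf0 p : Qf (0 : 'rV[R]_p) = 0.
Proof. by rewrite /Qf Bf0l. Qed.

Lemma psi_self M : psi F z M tau z = tau.
Proof.
rewrite psiE subrr /Pf mul0mx addr0 Qf0 mulr0 addr0 -frob2 -/(f1 F z).
have tn : tau != 0 by rewrite gt_eqF.
by field.
Qed.

Lemma LF2 : 0 < 2 * LF. Proof. by rewrite mulr_gt0. Qed.

Lemma step1 : LF * Qf (z - T) <= D.
Proof.
have [_ H] := Tmap_spec F z LF2 tau0.
have := H z; rewrite psi_self.
have -> : 2 * LF / 2 = LF by field.
move=> h; rewrite lerBrDr addrC; exact: h.
Qed.

Lemma D_ge0 : 0 <= D.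
Proof. apply: le_trans step1; by rewrite mulr_ge0 ?Qf_ge0 // ltW. Qed.

Lemma step_seg r y0 t : frob (y0 - z) <= r -> 0 <= t <= 1 ->
  t * (tau ^+ 2 - phi F z y0 ^+ 2) <= 2 * tau * (D + LF * r ^+ 2 * t ^+ 2).
Proof.
move=> hy /andP[t0 t1].
have [H _] := Tmap_spec F z LF2 tau0.
have := H (z + t *: (y0 - z)); rewrite [X in _ <= X]psiE /Pf.
have -> : z + t *: (y0 - z) - z = t *: (y0 - z) by rewrite addrC addKr.
set e := y0 - z; set a := Fhat F z; set J := 'J (Fhat F) z.
rewrite -scalemxAl QfD BfZr (QfZ t (e *m J)) (QfZ t e).
have ha : Qf a = tau ^+ 2 by rewrite -frob2.
have hp : phi F z y0 ^+ 2 = Qf a + 2 * Bf a (e *m J) + Qf (e *m J) by rewrite /phi frob2 QfD.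
have he : Qf e <= r ^+ 2.
  rewrite -frob2 !expr2; apply: ler_pM => //; exact: frob_ge0.
rewrite hp ha; set B := Bf a (e *m J); set Qv := Qf (e *m J); set Qe := Qf e.
set PT := psi F z (2 * LF) tau T => hPT.
have h1 : 0 <= (t - t ^+ 2) * Qv.
  apply: mulr_ge0; last exact: Qf_ge0.
  by rewrite subr_ge0 expr2 ler_piMl.
have h2 : 0 <= (tau * LF * t ^+ 2) * (r ^+ 2 - Qe).
  by apply: mulr_ge0; [rewrite !mulr_ge0 ?sqr_ge0 // ltW | rewrite subr_ge0].
have tn : tau != 0 by rewrite gt_eqF.
have e2 : 2 * tau * PT <= tau ^+ 2 + (tau ^+ 2 + 2 * (t * B) + t ^+ 2 * Qv)
          + 2 * tau * (2 * LF / 2 * (t ^+ 2 * Qe)).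
  have -> : tau ^+ 2 + (tau ^+ 2 + 2 * (t * B) + t ^+ 2 * Qv)
          + 2 * tau * (2 * LF / 2 * (t ^+ 2 * Qe)) =
     2 * tau * (tau / 2 + ((tau ^+ 2 + 2 * (t * B) + t ^+ 2 * Qv) / (2 * tau)
          + 2 * LF / 2 * (t ^+ 2 * Qe))) by field.
  by rewrite ler_pM2l ?mulr_gt0.
have e3 : 2 * LF / 2 = LF by field.
rewrite e3 in e2.
nra.
Qed.

Variable r : R.
Hypothesis r0 : 0 < r.

Let S := [set phi F z y ^+ 2 | y in [set y | frob (y - z) <= r]].

Lemma phi_self : phi F z z = tau.
Proof. by rewrite /phi subrr mul0mx addr0. Qed.

Lemma S_ne : S !=set0.
Proof.
exists (phi F z z ^+ 2); exists z => //=.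
by rewrite subrr frobE Qf0 sqrtr0 ltW.
Qed.

Lemma S_lb : has_lbound S.
Proof. by exists 0 => _ [y _ <-]; rewrite sqr_ge0. Qed.

Lemma Delta_ge0 : 0 <= Delta F r z.
Proof.
rewrite /Delta subr_ge0 /f2 -phi_self.
apply: (ge_inf S_lb); exists z => //=.
by rewrite subrr frobE Qf0 sqrtr0 ltW.
Qed.

Lemma step_delta t : 0 <= t <= 1 ->
  t * Delta F r z <= 2 * tau * (D + LF * r ^+ 2 * t ^+ 2).
Proof.
move=> /andP[t0 t1].
have hD := D_ge0.
have [->|tp] := eqVneq t 0.
  rewrite mul0r expr0n /= mulr0 addr0; apply: mulr_ge0 => //.
  by rewrite mulr_ge0 // ltW.
have tp' : 0 < t by rewrite lt_def tp t0.
set X := 2 * tau * (D + LF * r ^+ 2 * t ^+ 2).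
have hinf : tau ^+ 2 - X / t <= inf S.
  apply: lb_le_inf; first exact: S_ne.
  move=> _ [y hy <-].
  have := step_seg hy (t := t); rewrite t0 t1 => /(_ isT) h.
  have : tau ^+ 2 - phi F z y ^+ 2 <= X / t by rewrite ler_pdivlMr // mulrC.
  lra.
have : tau ^+ 2 - inf S <= X / t by lra.
by rewrite ler_pdivlMr // mulrC /Delta /f2.
Qed.

Lemma step2 : 2 * (LF * r) ^+ 2 *
   varkappa (Delta F r z / (4 * tau * LF * r ^+ 2)) <= LF * D.
Proof.
set u := Delta F r z / (4 * tau * LF * r ^+ 2).
have hD := D_ge0.
have hd := Delta_ge0.
have den : 0 < 4 * tau * LF * r ^+ 2 by rewrite !mulr_gt0 // exprn_gt0.
have hu : Delta F r z = 4 * tau * LF * r ^+ 2 * u.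
  by rewrite /u mulrC divfK // gt_eqF.
have u0 : 0 <= u by rewrite /u divr_ge0 // ltW.
have b0 : 0 < LF * r ^+ 2 by rewrite mulr_gt0 // exprn_gt0.
have -> : 2 * (LF * r) ^+ 2 = LF * (2 * (LF * r ^+ 2)) by rewrite exprMn; ring.
rewrite -mulrA ler_pM2l //.
rewrite /varkappa; case: ifP => hu1.
- have := step_delta (t := u); rewrite u0 hu1 => /(_ isT).
  rewrite hu => h.
  have : 2 * tau * (LF * r ^+ 2 * u ^+ 2) <= 2 * tau * D by nra.
  rewrite ler_pM2l ?mulr_gt0 // => h'.
  have -> : 2 * (LF * r ^+ 2) * (u ^+ 2 / 2) = LF * r ^+ 2 * u ^+ 2 by field.
  exact: h'.
- have := step_delta (t := 1); rewrite ler01 lexx => /(_ isT).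
  rewrite hu => h.
  have hu1' : 1 < u by rewrite ltNge hu1.
  have : 2 * tau * (LF * r ^+ 2 * (2 * u - 1)) <= 2 * tau * D by nra.
  rewrite ler_pM2l ?mulr_gt0 // => h'.
  have -> : 2 * (LF * r ^+ 2) * (u - 1 / 2) = LF * r ^+ 2 * (2 * u - 1) by field.
  exact: h'.
Qed.

End Step.
Section Final.
Variable R : realType.

Lemma tele (u : nat -> R) k : \sum_(i < k) (u i - u i.+1) = u 0%N - u k.
Proof.
elim: k => [|k IH]; first by rewrite big_ord0 subrr.
by rewrite big_ord_recr /= IH; ring.
Qed.

Lemma avg (G D : nat -> R) (c s : R) (k : nat) : (0 < k)%N ->
  (forall i, (i < k)%N -> G i <= c * D i) -> 0 <= c ->
  \sum_(i < k) D i <= k%:R * s ->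
  \big[Num.min/G 0%N]_(i < k) G i <= c * s.
Proof.
move=> k0 hG c0 hD.
set b := \big[Num.min/G 0%N]_(i < k) G i.
have h1 : k%:R * b <= \sum_(i < k) G i.
  have -> : k%:R * b = \sum_(i < k) b by rewrite sumr_const card_ord mulr_natl.
  apply: ler_sum => i _; rewrite /b.
  exact: (bigmin_inf i).
have h2 : \sum_(i < k) G i <= c * \sum_(i < k) D i.
  rewrite mulr_sumr; apply: ler_sum => i _; exact: hG.
have h3 : c * \sum_(i < k) D i <= c * (k%:R * s) by rewrite ler_wpM2l.
have kp : 0 < k%:R :> R by rewrite ltr0n.
have : k%:R * b <= k%:R * (c * s).
  by apply: le_trans h1 (le_trans h2 _); rewrite mulrCA.
by rewrite ler_pM2l.
Qed.

Lemma iter_bound (LF L : R) j l : 0 < L -> L <= LF -> L <= l <= 2 * LF ->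
  L <= iter j (fun l => Num.min (2 * l) (2 * LF)) l <= 2 * LF.
Proof.
move=> L0 LLF; elim: j => [//|j IH] /= h.
have /andP[h1 h2] := IH h.
rewrite le_min ge_min lexx orbT !andbT.
apply/andP; split; lra.
Qed.

Lemma psi_monoL n m (F : 'rV[R]_n -> 'rV[R]_m) z L1 L2 tau y : L1 <= L2 ->
  psi F z L1 tau y <= psi F z L2 tau y.
Proof.
move=> h; rewrite /psi lerD2l; apply: ler_wpM2r; first exact: sqr_ge0.
by rewrite ler_pM2r.
Qed.

End Final.
Theorem theorem1 (R : realType) (n m : nat)
  (F : 'rV[R]_n -> 'rV[R]_m) (Fset : set 'rV[R]_n) (LF L eps : R)
  (x : nat -> 'rV[R]_n) (Lacc Lst : nat -> R) (k : nat) (r : R) :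
  (* F smooth (we only use differentiability everywhere) *)
  (forall z, differentiable F z) ->
  (* Fset closed, convex, with nonempty interior *)
  closed Fset -> convex_set Fset -> (interior Fset !=set0) ->
  (* Assumption 1 *)
  (forall z, Fset z -> differentiable (Fhat F) z) ->
  (forall y z, Fset y -> Fset z ->
     frob ('J (Fhat F) y - 'J (Fhat F) z) <= LF * frob (y - z)) ->
  (* parameters of Scheme 1 *)
  0 < L -> L <= LF -> 0 <= eps ->
  (* level set of x_0 contained in Fset, and the sequence lies in Fset *)
  [set z | f1 F z <= f1 F (x 0%N)] `<=` Fset ->
  (forall i, (i <= k)%N -> Fset (x i)) ->
  (* {x_i} generated by Scheme 1 with tau_i = f1(x_i), eps_i = eps *)
  scheme1 F LF L eps x Lacc Lst k ->
  (0 < k)%N -> 0 < r ->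
  let s := eps + (f1 F (x 0%N) - f1 F (x k)) / k%:R in
  8 * LF ^+ 2 / L * s >=
    \big[Num.min/ frob ((2 * LF) *: (Tmap F (2 * LF) (f1 F (x 0%N)) (x 0%N) - x 0%N)) ^+ 2]_(i < k)
      frob ((2 * LF) *: (Tmap F (2 * LF) (f1 F (x i)) (x i) - x i)) ^+ 2
  /\
  LF * s >=
    \big[Num.min/ 2 * (LF * r) ^+ 2 *
                  varkappa (Delta F r (x 0%N) / (4 * f1 F (x 0%N) * LF * r ^+ 2))]_(i < k)
      (2 * (LF * r) ^+ 2 *
         varkappa (Delta F r (x i) / (4 * f1 F (x i) * LF * r ^+ 2))).
Proof.
move=> _ _ _ _ _ _ L0 LLF eps0 _ _ [HL0 Hs] k0 r0 s.
have LF0 : 0 < LF by apply: lt_le_trans LLF.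
have Lst_b : forall i, (i <= k)%N -> L <= Lst i <= 2 * LF.
  elim=> [|i IH] hi; first by rewrite HL0 lexx /=; lra.
  have [[j hj] [_ [_ [_ [_ hst]]]]] := Hs i hi.
  have := @iter_bound _ LF L j (Lst i) L0 LLF (IH (ltnW hi)); rewrite -hj => /andP[a1 a2].
  rewrite hst le_max lexx orbT /= ge_max; apply/andP; split; lra.
have Lacc_b : forall i, (i < k)%N -> L <= Lacc i <= 2 * LF.
  move=> i hi; have [[j hj] _] := Hs i hi.
  by rewrite hj; apply: iter_bound => //; apply: Lst_b; apply: ltnW.
pose D i := f1 F (x i) - psi F (x i) (2 * LF) (f1 F (x i))
                (Tmap F (2 * LF) (f1 F (x i)) (x i)).
have hD : forall i, (i < k)%N -> D i <= f1 F (x i) - f1 F (x i.+1) + eps.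
  move=> i hi.
  have [_ [tau0 [he [_ [hf _]]]]] := Hs i hi.
  have /andP[la1 la2] := Lacc_b i hi.
  have [Hm _] := Tmap_spec F (x i) (lt_le_trans L0 la1) tau0.
  have := Hm (Tmap F (2 * LF) (f1 F (x i)) (x i)).
  have := psi_monoL F (x i) (f1 F (x i)) (Tmap F (2 * LF) (f1 F (x i)) (x i)) la2.
  rewrite /D; lra.
have hsum : \sum_(i < k) D i <= k%:R * s.
  apply: le_trans (_ : \sum_(i < k) (f1 F (x i) - f1 F (x i.+1) + eps) <= _).
    by apply: ler_sum => i _; apply: hD.
  rewrite big_split /= (tele (fun i => f1 F (x i))) sumr_const card_ord.
  have kn : k%:R != 0 :> R by rewrite pnatr_eq0 -lt0n.
  set E := eps *+ k.
  have -> : E = k%:R * eps by rewrite /E mulr_natl.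
  rewrite /s mulrDr mulrCA mulfV // mulr1; lra.
have s0 : 0 <= s.
  have : 0 <= \sum_(i < k) D i.
    apply: sumr_ge0 => i _; apply: D_ge0 => //.
    by have [_ [tau0 _]] := Hs i (ltn_ord i).
  move=> h; have kp : 0 < k%:R :> R by rewrite ltr0n.
  have : 0 <= k%:R * s by apply: le_trans h hsum.
  by rewrite pmulr_rge0.
split.
- apply: le_trans (_ : 4 * LF * s <= _); last first.
    apply: ler_wpM2r => //.
    rewrite ler_pdivlMr //.
    have : 0 <= LF * (LF - L) by rewrite mulr_ge0 ?subr_ge0 // ltW.
    have : 0 <= LF * L by rewrite mulr_ge0 // ltW.
    rewrite expr2; lra.
  apply: (@avg _ (fun i : nat => frob ((2 * LF) *: (Tmap F (2 * LF) (f1 F (x i)) (x i) - x i)) ^+ 2) D) => //; last by rewrite mulr_ge0 // ltW.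
  move=> i hi.
  have [_ [tau0 _]] := Hs i hi.
  have := step1 LF0 tau0.
  rewrite -/(D i) => h.
  rewrite frob2 QfZ (QfB (Tmap F (2 * LF) (f1 F (x i)) (x i))).
  have -> : (2 * LF) ^+ 2 * Qf (x i - Tmap F (2 * LF) (f1 F (x i)) (x i))
      = 4 * LF * (LF * Qf (x i - Tmap F (2 * LF) (f1 F (x i)) (x i))) by ring.
  by rewrite ler_wpM2l // mulr_ge0 // ltW.
- apply: (@avg _ (fun i : nat => 2 * (LF * r) ^+ 2 *
         varkappa (Delta F r (x i) / (4 * f1 F (x i) * LF * r ^+ 2))) D) => //; last exact: ltW.
  move=> i hi.
  have [_ [tau0 _]] := Hs i hi.
  exact: step2.
Qed.
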